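(* Let $R=\mathbb{Z}[x_1,\dots,x_n]$ or $R=\mathbb{Z}[[x_1,\dots,x_n]]$, and fix $i\in\{1,\dots,n\}$. For every $f\in R$ and every positive integer $m$, \[\sum_{\ell=0}^{m}(\ell-1)\,D_{\ell,i}(f)\,D_{m-\ell,i}(f^{m-1})=0 .\] The same identity holds with $\mathbb{Z}$ replaced by any field $k$ of characteristic $p>0$ (with the operators reduced mod $p$).
   Context: For $m\ge 0$, $D_{m,i}:R\to R$ is the map that is linear over $\mathbb{Z}[x_1,\dots,x_{i-1},x_{i+1},\dots,x_n]$ (resp. over $\mathbb{Z}[[x_1,\dots,x_{i-1},x_{i+1},\dots,x_n]]$, and compatible with infinite sums in the power series case) and sends $x_i^{\ell}$ to $\binom{\ell}{m}x_i^{\ell-m}$ (which is $0$ when $\ell<m$); $D_{0,i}$ is the identity. Formally $D_{m,i}=\frac{1}{m!}\frac{\partial^m}{\partial x_i^m}$. Over a field $k$ of characteristic $p$, $D_{m,i}$ is defined by the same formula on $k[x_1,\dots,x_n]$ or $k[[x_1,\dots,x_n]]$. *)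

(* Defs.v *)
From HB Require Import structures.
From mathcomp Require Import all_boot all_order all_algebra.
Set Implicit Arguments. Unset Strict Implicit. Unset Printing Implicit Defensive.
Import Order.TTheory GRing.Theory Num.Theory.
Local Open Scope ring_scope.

(* exponent vectors (monomials) x^c = prod_j x_j^(c j) *)
Definition mono (n : nat) := {ffun 'I_n -> nat}.

Definition mseries (K : comNzRingType) (n : nat) := mono n -> K.

Definition mdeg n (c : mono n) : nat := (\sum_(j < n) c j)%N.

Definition mlow n N (b : {ffun 'I_n -> 'I_N}) : mono n := [ffun j => nat_of_ord (b j)].

Definition msubm n (c b : mono n) : mono n := [ffun j => (c j - b j)%N].

(* Cauchy product: (f*g)_c = sum_{b <= c} f_b g_{c-b} *)
Definition mmul (K : comNzRingType) n (f g : mseries K n) : mseries K n :=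
  fun c => \sum_(b : {ffun 'I_n -> 'I_(mdeg c).+1} | [forall j, mlow b j <= c j]%N)
             f (mlow b) * g (msubm c (mlow b)).

Definition mone (K : comNzRingType) n : mseries K n :=
  fun c => if c == [ffun=> 0%N] then 1 else 0.

Definition mpow (K : comNzRingType) n (f : mseries K n) (k : nat) : mseries K n :=
  iter k (mmul f) (@mone K n).

(* D_{m,i} : x_i^l |-> binom(l,m) x_i^(l-m), linear over the other variables:
   coefficient of x^c in D_{m,i} f is binom(c_i + m, m) * (coef of x^(c + m e_i) in f) *)
Definition Dop (K : comNzRingType) n (m : nat) (i : 'I_n) (f : mseries K n) : mseries K n :=
  fun c => ('C(c i + m, m))%:R *
           f [ffun j => if j == i then (c j + m)%N else c j].

Definition identity_sum (K : comNzRingType) n (i : 'I_n) (f : mseries K n) (m : nat)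
  : mseries K n :=
  fun c => \sum_(l < m.+1)
     ((l%:R - 1) * mmul (Dop l i f) (Dop (m - l) i (mpow f (m - 1))) c).

(* Main.v *)
From Stdlib Require Import Lia FunctionalExtensionality.
Require Import Defs.
From HB Require Import structures.
From mathcomp Require Import all_boot all_order all_algebra.
Import GRing.Theory.
Local Open Scope ring_scope.

Ltac nlia := (try match goal with |- is_true (leq ?a ?b) => apply/(@leP a b) end);
  (try match goal with |- @eq nat _ _ => idtac end);
  (repeat match goal with H : is_true (leq ?a ?b) |- _ => generalize (@leP a b H); clear H end);
  rewrite -?plusE -?minusE; intros; lia.

Definition mle {n} (a b : mono n) : bool := [forall j, (a j <= b j)%N].
Definition madd {n} (a b : mono n) : mono n := [ffun j => (a j + b j)%N].

Lemma mleP {n} (a b : mono n) : reflect (forall j, (a j <= b j)%N) (mle a b).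
Proof. exact: forallP. Qed.

Lemma mle_trans {n} (a b c : mono n) : mle a b -> mle b c -> mle a c.
Proof. move=> /mleP H1 /mleP H2; apply/mleP=> j; exact: leq_trans (H1 j) (H2 j). Qed.

Lemma mdeg_ge {n} (c : mono n) j : (c j <= mdeg c)%N.
Proof. by rewrite /mdeg (bigD1 j) //= leq_addr. Qed.

Definition box {n} (c : mono n) : seq (mono n) :=
  [seq mlow b | b <- index_enum {ffun 'I_n -> 'I_(mdeg c).+1} & [forall j, mlow b j <= c j]%N].

Lemma mlow_inj {n N} : injective (@mlow n N).
Proof.
move=> b b' E; apply/ffunP=> j; apply: ord_inj.
by have := congr1 (fun f : mono n => f j) E; rewrite !ffunE.
Qed.

Lemma mem_box {n} (c d : mono n) : (d \in box c) = mle d c.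
Proof.
apply/idP/idP.
  case/mapP=> b; rewrite mem_filter => /andP[Hb _] ->; exact: Hb.
move=> H; apply/mapP.
have Hd : forall j, (d j < (mdeg c).+1)%N.
  move=> j; rewrite ltnS; apply: leq_trans (mdeg_ge c j); exact: (mleP _ _ H).
exists [ffun j => Ordinal (Hd j)].
  rewrite mem_filter mem_index_enum andbT; apply/forallP=> j; rewrite !ffunE /=; exact: (mleP _ _ H).
by apply/ffunP=> j; rewrite !ffunE.
Qed.

Lemma box_uniq {n} (c : mono n) : uniq (box c).
Proof. rewrite map_inj_uniq ?filter_uniq ?index_enum_uniq //; exact: mlow_inj. Qed.

Lemma mmulE {K : comNzRingType} {n} (f g : mseries K n) c :
  mmul f g c = \sum_(a <- box c) f a * g (msubm c a).
Proof. by rewrite big_map big_filter. Qed.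

Lemma sum_perm {K : comNzRingType} {T : eqType} (s t : seq T) (F : T -> K) :
  uniq s -> uniq t -> s =i t -> \sum_(x <- s) F x = \sum_(x <- t) F x.
Proof. by move=> us ut st; apply: perm_big; apply: uniq_perm. Qed.

Lemma box_flip {K : comNzRingType} {n} (c : mono n) (G : mono n -> K) :
  \sum_(a <- box c) G a = \sum_(a <- box c) G (msubm c a).
Proof.
rewrite -(big_map (msubm c) xpredT G); apply: sum_perm; first exact: box_uniq.
  rewrite map_inj_in_uniq ?box_uniq // => a b; rewrite !mem_box => /mleP Ha /mleP Hb E.
  apply/ffunP=> j; have := congr1 (fun f : mono n => f j) E; rewrite !ffunE => E'.
  by rewrite -(subKn (Ha j)) E' subKn.
move=> d; rewrite mem_box; apply/idP/mapP.
  move=> /mleP H; exists (msubm c d); first by rewrite mem_box; apply/mleP=> j; rewrite ffunE leq_subr.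
  by apply/ffunP=> j; rewrite !ffunE subKn.
case=> a _ ->; apply/mleP=> j; rewrite ffunE leq_subr //.
Qed.

Lemma box_shift {K : comNzRingType} {n} (d s : mono n) (G : mono n -> K) :
  \sum_(e <- box d) G (madd e s) = \sum_(b <- box (madd d s) | mle s b) G b.
Proof.
rewrite -(big_map (madd^~ s) xpredT G) -[RHS]big_filter; apply: sum_perm.
- rewrite map_inj_uniq ?box_uniq // => a b E; apply/ffunP=> j.
  by have := congr1 (fun f : mono n => f j) E; rewrite !ffunE => /addIn.
- by rewrite filter_uniq ?box_uniq.
move=> b; rewrite mem_filter mem_box; apply/mapP/idP.
  case=> e; rewrite mem_box => /mleP He ->; apply/andP; split; apply/mleP=> j; rewrite !ffunE.
    exact: leq_addl.
  by rewrite leq_add2r.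
case/andP=> /mleP H1 /mleP H2; exists (msubm b s).
  by rewrite mem_box; apply/mleP=> j; rewrite ffunE leq_subLR addnC -[d j]/(d j) (leq_trans (H2 j)) // ffunE addnC.
by apply/ffunP=> j; rewrite !ffunE subnK.
Qed.

Lemma box_sub {K : comNzRingType} {n} (b c : mono n) (F : mono n -> K) :
  mle b c -> \sum_(a <- box b) F a = \sum_(a <- box c | mle a b) F a.
Proof.
move=> Hbc; rewrite -[RHS]big_filter; apply: sum_perm; rewrite ?filter_uniq ?box_uniq //.
move=> a; rewrite mem_filter !mem_box; apply/idP/andP; last by case.
by move=> H; split=> //; apply: mle_trans Hbc.
Qed.

Lemma mmulC {K : comNzRingType} {n} (f g : mseries K n) : mmul f g = mmul g f.
Proof.
apply: functional_extensionality => c; rewrite !mmulE box_flip.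
apply: eq_big_seq => a; rewrite mem_box => /mleP Ha; rewrite mulrC; congr (g _ * _).
by apply/ffunP=> j; rewrite !ffunE subKn.
Qed.

Lemma mmulA {K : comNzRingType} {n} (f g h : mseries K n) :
  mmul f (mmul g h) = mmul (mmul f g) h.
Proof.
apply: functional_extensionality => c; rewrite !mmulE.
transitivity (\sum_(b <- box c) \sum_(a <- box c | mle a b) f a * g (msubm b a) * h (msubm c b)); last first.
  apply: eq_big_seq => b; rewrite mem_box => Hb; rewrite mmulE big_distrl /= (box_sub _ _ _ Hb) //.
rewrite [RHS](exchange_big_dep xpredT) //=; apply: eq_big_seq => a; rewrite mem_box => /mleP Ha.
have E : madd (msubm c a) a = c by apply/ffunP=> j; rewrite !ffunE subnK.
rewrite -[X in box X]E.
rewrite -box_shift mmulE big_distrr /=; apply: eq_big_seq => e; rewrite mem_box => /mleP He.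
rewrite mulrA; congr (_ * g _ * h _); apply/ffunP=> j; rewrite !ffunE.
  by rewrite addnK.
by rewrite addnC subnDA.
Qed.

Lemma mmulCA {K : comNzRingType} {n} (f g h : mseries K n) :
  mmul f (mmul g h) = mmul g (mmul f h).
Proof. by rewrite mmulA (mmulC f g) -mmulA. Qed.

Lemma mmul_sumr {K : comNzRingType} {n} (f : mseries K n) (M : nat) (G : nat -> mseries K n) c :
  mmul f (fun d => \sum_(l < M) G l d) c = \sum_(l < M) mmul f (G l) c.
Proof.
rewrite mmulE (eq_bigr (fun a => \sum_(l < M) f a * G l (msubm c a))); last by move=> a _; rewrite big_distrr.
by rewrite exchange_big; apply: eq_bigr => l _; rewrite mmulE.
Qed.

Lemma mmulZr {K : comNzRingType} {n} (f g : mseries K n) (x : K) c :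
  mmul f (fun d => x * g d) c = x * mmul f g c.
Proof.
rewrite !mmulE big_distrr; apply: eq_bigr => a _; by rewrite mulrCA.
Qed.

Lemma mmul0r {K : comNzRingType} {n} (f : mseries K n) c : mmul f (fun _ => 0) c = 0.
Proof. by rewrite mmulE big1 // => a _; rewrite mulr0. Qed.

Lemma Dop0 {K : comNzRingType} {n} (i : 'I_n) (g : mseries K n) : Dop 0 i g = g.
Proof.
apply: functional_extensionality => c; rewrite /Dop addn0 bin0 mul1r; congr g.
by apply/ffunP=> j; rewrite ffunE addn0; case: ifP.
Qed.

Lemma Dop_mone {K : comNzRingType} {n} (i : 'I_n) l : (0 < l)%N -> Dop l i (@mone K n) = (fun _ => 0).
Proof.
move=> Hl; apply: functional_extensionality => c; rewrite /Dop /mone.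
case: eqP; last by rewrite mulr0.
move/(congr1 (fun f : mono n => f i)); rewrite !ffunE eqxx => E.
by move/eqP: E; rewrite addn_eq0 => /andP[_ /eqP E]; move: Hl; rewrite E.
Qed.

Lemma vandermonde (a b k : nat) :
  (\sum_(l < k.+1) 'C(a, l) * 'C(b, k - l))%N = 'C(a + b, k).
Proof.
elim: a k => [|a IH] k.
  rewrite big_ord_recl /= bin0 subn0 mul1n big1 ?addn0 // => l _.
case: k => [|k]; first by rewrite big_ord_recl big_ord0 !bin0.
rewrite big_ord_recl /= bin0 mul1n subn0.
rewrite (eq_bigr (fun l : 'I_k.+1 => 'C(a, bump 0 l) * 'C(b, k - l) + 'C(a, l) * 'C(b, k - l))%N); last first.
  by move=> l _; rewrite /bump /= add1n binS subSS mulnDl.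
rewrite big_split /= IH addnA.
have -> : ('C(b, k.+1) + \sum_(i < k.+1) 'C(a, bump 0 i) * 'C(b, k - i) = \sum_(l < k.+2) 'C(a, l) * 'C(b, k.+1 - l))%N.
  by rewrite [RHS]big_ord_recl bin0 mul1n subn0.
by rewrite IH addSn binS.
Qed.

Definition ush {n} (i : 'I_n) (l : nat) : mono n := [ffun j => if j == i then l else 0%N].

Lemma arith1 (a c l k : nat) : (a <= c)%N -> (l <= k)%N -> (c + k - (a + l) = c - a + (k - l))%N.
Proof. move=> H1 H2; nlia. Qed.

Lemma leibniz {K : comNzRingType} {n} (i : 'I_n) (f g : mseries K n) k c :
  Dop k i (mmul f g) c = \sum_(l < k.+1) mmul (Dop l i f) (Dop (k - l) i g) c.
Proof.
rewrite {1}/Dop.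
set c' := [ffun j => if j == i then (c j + k)%N else c j].
have c'i : c' i = (c i + k)%N by rewrite ffunE eqxx.
pose H (l : nat) (a' : mono n) := ('C(a' i, l) * 'C(c' i - a' i, k - l))%:R * (f a' * g (msubm c' a')).
rewrite mmulE big_distrr /=.
rewrite (eq_big_seq (fun a' => \sum_(l < k.+1) H l a')); last first.
  move=> a'; rewrite mem_box => /mleP Ha.
  rewrite /H -mulr_suml -natr_sum vandermonde subnKC ?Ha // c'i //.
rewrite exchange_big /=; apply: eq_bigr => l _.
have Hlk : (l <= k)%N by rewrite -ltnS.
set u := ush i l.
rewrite mmulE.
transitivity (\sum_(a <- box c) H l (madd a u)); last first.
  apply: eq_big_seq => a; rewrite mem_box => /mleP Ha.
  rewrite /H /Dop !ffunE eqxx /= !natrM.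
  have E1 : madd a u = [ffun j => if j == i then (a j + l)%N else a j].
    by apply/ffunP=> j; rewrite !ffunE; case: (j == i); rewrite ?addn0.
  have E2 : msubm c' (madd a u) = [ffun j => if j == i then (msubm c a j + (k - l))%N else msubm c a j].
    apply/ffunP=> j; rewrite !ffunE; case: eqP => [->|_]; last by rewrite addn0.
    by rewrite arith1.
  rewrite E2 E1 arith1 //.
  by rewrite mulrACA.
rewrite box_shift.
have Hcu : mle (madd c u) c'.
  by apply/mleP=> j; rewrite !ffunE; case: (j == i); rewrite ?addn0 ?leq_add2l.
rewrite [RHS]big_mkcond (box_sub _ _ _ Hcu) /= [RHS]big_mkcond /=.
apply: eq_big_seq => b; rewrite mem_box => /mleP Hb.
have Hbi : (b i <= c i + k)%N by rewrite -c'i.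
case: (leqP l (b i)) => H1; last first.
  by rewrite /H bin_small // mul0n mul0r !if_same.
case: (leqP (b i) (c i + l)) => H2; last first.
  rewrite /H (bin_small (n := (c' i - b i)%N)) ?muln0 ?mul0r ?if_same //.
  rewrite c'i; nlia.
have -> : mle b (madd c u).
  apply/mleP=> j; rewrite !ffunE; case: eqP => [->|/eqP Hj] //; rewrite addn0.
  by have := Hb j; rewrite ffunE (negbTE Hj).
have -> // : mle u b.
by apply/mleP=> j; rewrite !ffunE; case: eqP => [->|_].
Qed.

Lemma triangle {K : comNzRingType} (N : nat) (F : nat -> nat -> K) :
  \sum_(j < N.+1) \sum_(l < (N - j).+1) F j l = \sum_(l < N.+1) \sum_(j < (N - l).+1) F j l.
Proof.
have E : forall (G : nat -> nat -> K), \sum_(j < N.+1) \sum_(l < (N - j).+1) G j l =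
   \sum_(j < N.+1) \sum_(l < N.+1) (if (j + l <= N)%N then G j l else 0).
  move=> G; apply: eq_bigr => j _; rewrite (big_ord_widen N.+1) ?ltnS ?leq_subr // big_mkcond.
  by apply: eq_bigr => l _; rewrite ltnS leq_subRL // -ltnS.
rewrite E (E (fun l j => F j l)) exchange_big /=; apply: eq_bigr => l _; apply: eq_bigr => j _; by rewrite addnC.
Qed.

Lemma claim {K : comNzRingType} {n} (i : 'I_n) (f : mseries K n) k : forall N c,
  N%:R * Dop N i (mpow f k.+1) c =
  k.+1%:R * \sum_(j < N.+1) (j%:R * mmul (Dop j i f) (Dop (N - j) i (mpow f k)) c).
Proof.
elim: k => [|k IH] N c.
  have -> : mpow f 1 = mmul f (@mone K n) by [].
  rewrite leibniz !big_ord_recr /= !big1 ?add0r ?mul1r // => j _.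
    by rewrite Dop_mone ?mmul0r ?mulr0 // subn_gt0.
  by rewrite Dop_mone ?mmul0r ?mulr0 // subn_gt0.
set P := mpow f k.+1.
set Q := mpow f k.
have -> : mpow f k.+2 = mmul f P by [].
set T := \sum_(j < N.+1) \sum_(l < (N - j).+1)
   l%:R * mmul (Dop l i f) (mmul (Dop j i f) (Dop (N - j - l) i Q)) c.
have S1 : \sum_(j < N.+1) (j%:R * mmul (Dop j i f) (Dop (N - j) i P) c) = T.
  rewrite /T (triangle N (fun j l => l%:R * mmul (Dop l i f) (mmul (Dop j i f) (Dop (N - j - l) i Q)) c)); apply: eq_bigr => l _.
  have -> : Dop (N - l) i P = fun d => \sum_(j < (N - l).+1) mmul (Dop j i f) (Dop (N - l - j) i Q) d.
    by apply: functional_extensionality => d; rewrite leibniz.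
  rewrite (mmul_sumr _ _ (fun j d => mmul (Dop j i f) (Dop (N - l - j) i Q) d)) mulr_sumr; apply: eq_bigr => j _; by rewrite subnAC.
have S2 : \sum_(j < N.+1) ((N - j)%:R * mmul (Dop j i f) (Dop (N - j) i P) c) = k.+1%:R * T.
  rewrite /T mulr_sumr; apply: eq_bigr => j _.
  rewrite -mmulZr.
  have -> : (fun d => (N - j)%:R * Dop (N - j) i P d) =
     fun d => k.+1%:R * \sum_(l < (N - j).+1) (l%:R * mmul (Dop l i f) (Dop (N - j - l) i Q) d).
    by apply: functional_extensionality => d; rewrite IH.
  rewrite mmulZr; congr (_ * _).
  rewrite (mmul_sumr _ _ (fun l d => l%:R * mmul (Dop l i f) (Dop (N - j - l) i Q) d)).
  apply: eq_bigr => l _; by rewrite mmulZr mmulCA.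
rewrite leibniz mulr_sumr.
rewrite (eq_bigr (fun j : 'I_N.+1 => j%:R * mmul (Dop j i f) (Dop (N - j) i P) c +
   (N - j)%:R * mmul (Dop j i f) (Dop (N - j) i P) c)); last first.
  by move=> j _; rewrite -mulrDl -natrD subnKC // -ltnS.
rewrite big_split S2 S1 -[in RHS]natr1 mulrDl mul1r addrC.
by [].
Qed.

Lemma main_tf {A : comNzRingType}
  (tf : forall m (x : A), (0 < m)%N -> m%:R * x = 0 -> x = 0)
  n (i : 'I_n) (f : mseries A n) m c : (0 < m)%N -> identity_sum i f m c = 0.
Proof.
case: m => // k _.
have H1 := claim i f k k.+1 c.
have H2 : Dop k.+1 i (mpow f k.+1) c =
  \sum_(j < k.+2) (j%:R * mmul (Dop j i f) (Dop (k.+1 - j) i (mpow f k)) c).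
  apply/eqP; rewrite -subr_eq0; apply/eqP; apply: (tf k.+1) => //.
  by rewrite mulrBr H1 subrr.
rewrite /identity_sum subn1 /=.
rewrite (eq_bigr (fun l : 'I_k.+2 => l%:R * mmul (Dop l i f) (Dop (k.+1 - l) i (mpow f k)) c
   - mmul (Dop l i f) (Dop (k.+1 - l) i (mpow f k)) c)); last by move=> l _; rewrite mulrBl mul1r.
rewrite sumrB -H2 -leibniz.
by rewrite subrr.
Qed.

Lemma mmul_rm {A B : comNzRingType} (phi : {rmorphism A -> B}) n (f g : mseries A n) c :
  phi (mmul f g c) = mmul (fun d => phi (f d)) (fun d => phi (g d)) c.
Proof. rewrite /mmul rmorph_sum; apply: eq_bigr => b _; by rewrite rmorphM. Qed.

Lemma Dop_rm {A B : comNzRingType} (phi : {rmorphism A -> B}) n l (i : 'I_n) (f : mseries A n) :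
  (fun d => phi (Dop l i f d)) = Dop l i (fun d => phi (f d)).
Proof. apply: functional_extensionality => d; by rewrite /Dop rmorphM rmorph_nat. Qed.

Lemma mpow_rm {A B : comNzRingType} (phi : {rmorphism A -> B}) n (f : mseries A n) k :
  (fun d => phi (mpow f k d)) = mpow (fun d => phi (f d)) k.
Proof.
elim: k => [|k IH]; apply: functional_extensionality => d.
  by rewrite /= /mone; case: ifP; rewrite ?rmorph1 ?rmorph0.
by rewrite /= mmul_rm IH.
Qed.

Lemma rm_identity {A B : comNzRingType} (phi : {rmorphism A -> B}) n (i : 'I_n) (f : mseries A n) m c :
  phi (identity_sum i f m c) = identity_sum i (fun d => phi (f d)) m c.
Proof.
rewrite /identity_sum rmorph_sum; apply: eq_bigr => l _.
by rewrite rmorphM rmorphB rmorph_nat rmorph1 mmul_rm !Dop_rm mpow_rm.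
Qed.

Definition shm {n} (i : 'I_n) (c : mono n) l : mono n := [ffun j => if j == i then (c j + l)%N else c j].

Lemma mle_refl {n} (c : mono n) : mle c c.
Proof. by apply/mleP. Qed.

Lemma shm_mono {n} (i : 'I_n) (c d : mono n) l l' : mle d c -> (l <= l')%N -> mle (shm i d l) (shm i c l').
Proof.
move=> /mleP H Hl; apply/mleP=> j; rewrite !ffunE; case: (j == i) => //.
exact: leq_add.
Qed.

Lemma loc_mmul {K : comNzRingType} {n} (f f' g g' : mseries K n) c :
  (forall d, mle d c -> f d = f' d) -> (forall d, mle d c -> g d = g' d) ->
  forall d, mle d c -> mmul f g d = mmul f' g' d.
Proof.
move=> Hf Hg d Hd; rewrite !mmulE; apply: eq_big_seq => a; rewrite mem_box => Ha.
rewrite Hf ?Hg //; first apply: mle_trans _ Hd.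
  by apply/mleP=> j; rewrite ffunE leq_subr.
exact: mle_trans Hd.
Qed.

Lemma loc_Dop {K : comNzRingType} {n} (i : 'I_n) (f f' : mseries K n) c l :
  (forall d, mle d (shm i c l) -> f d = f' d) -> forall d, mle d c -> Dop l i f d = Dop l i f' d.
Proof. move=> Hf d Hd; rewrite /Dop Hf //; exact: shm_mono. Qed.

Lemma loc_mpow {K : comNzRingType} {n} (f f' : mseries K n) c k :
  (forall d, mle d c -> f d = f' d) -> forall d, mle d c -> mpow f k d = mpow f' k d.
Proof.
move=> Hf; elim: k => [|k IH] d Hd //=.
exact: (loc_mmul _ _ _ _ _ Hf IH d Hd).
Qed.

Lemma loc_id {K : comNzRingType} {n} (i : 'I_n) (f f' : mseries K n) m c :
  (forall d, mle d (shm i c m) -> f d = f' d) -> identity_sum i f m c = identity_sum i f' m c.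
Proof.
move=> Hf; rewrite /identity_sum; apply: eq_bigr => l _; congr (_ * _).
have Hl : (l <= m)%N by rewrite -ltnS.
apply: (loc_mmul _ _ _ _ c); last exact: mle_refl.
  apply: loc_Dop => d Hd; apply: Hf; apply: mle_trans Hd _; apply: shm_mono => //; exact: mle_refl.
apply: loc_Dop => d Hd; apply: (loc_mpow _ _ (shm i c (m - l))) => //.
move=> e He; apply: Hf; apply: mle_trans He _; apply: shm_mono; [exact: mle_refl | exact: leq_subr].
Qed.

Fixpoint PR (k : nat) : idomainType := if k is k'.+1 then ({poly PR k'} : idomainType) else int.

Fixpoint ev {K : comNzRingType} (v : nat -> K) (k : nat) : {rmorphism PR k -> K} :=
  match k with
  | 0 => (intr : {rmorphism int -> K})
  | k'.+1 => (horner_morph (fun a => mulrC (v k') (ev v k' a)) : {rmorphism {poly PR k'} -> K})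
  end.

Fixpoint var (k j : nat) : PR k :=
  match k with 0 => 0 | k'.+1 => if j == k' then 'X else (var k' j)%:P end.

Lemma ev_var {K : comNzRingType} (v : nat -> K) k j : (j < k)%N -> ev v k (var k j) = v j.
Proof.
elim: k => // k IH; rewrite ltnS leq_eqVlt => /orP[/eqP->|Hj] /=.
  by rewrite eqxx horner_morphX.
rewrite (ltn_eqF Hj) horner_morphC IH //.
Qed.

Lemma PR_char k m : (0 < m)%N -> (m%:R : PR k) != 0.
Proof.
elim: k => [|k IH] Hm /=; first by rewrite Num.Theory.pnatr_eq0 -lt0n.
by rewrite -polyC_natr polyC_eq0 IH.
Qed.

Lemma PR_tf k m (x : PR k) : (0 < m)%N -> m%:R * x = 0 -> x = 0.
Proof. by move=> Hm /eqP; rewrite mulf_eq0 (negbTE (PR_char k m Hm)) /= => /eqP. Qed.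

Lemma general {K : comNzRingType} n (i : 'I_n) (f : mseries K n) m c :
  (0 < m)%N -> identity_sum i f m c = 0.
Proof.
move=> Hm.
set C := shm i c m.
set B := mdeg C.
pose T := {ffun 'I_n -> 'I_B.+1}.
pose s := enum T.
pose N := size s.
pose x0 : T := [ffun => ord0].
pose castB (d : mono n) : T := [ffun j => inord (d j)].
pose v (j : nat) := f (mlow (nth x0 s j)).
pose g (d : mono n) : PR N := if mle d C then var N (index (castB d) s) else 0.
have Hg : forall d, mle d C -> f d = ev v N (g d).
  move=> d Hd; rewrite /g Hd ev_var; last by rewrite index_mem mem_enum.
  rewrite /v nth_index ?mem_enum //; congr f; apply/ffunP=> j; rewrite !ffunE inordK //.
  rewrite ltnS; apply: leq_trans (mdeg_ge C j); exact: (mleP _ _ Hd).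
rewrite (loc_id i f (fun d => ev v N (g d)) m c) //.
by rewrite -rm_identity (main_tf (@PR_tf N)) // rmorph0.
Qed.

Theorem mainTheorem3 :
  (forall (n : nat) (i : 'I_n) (f : mseries int n) (m : nat), (0 < m)%N ->
     forall c : mono n, identity_sum i f m c = 0)
  /\
  (forall (k : fieldType) (p : nat), prime p -> p \in [pchar k] ->
     forall (n : nat) (i : 'I_n) (f : mseries k n) (m : nat), (0 < m)%N ->
     forall c : mono n, identity_sum i f m c = 0).
Proof.
split.
  by move=> n i f m Hm c; apply: general.
by move=> k p _ _ n i f m Hm c; apply: general.
Qed.
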